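(* Let $K$ be the cycle Kirchhoff–Symanzik matrix and ${*K}$ the cocycle Kirchhoff–Symanzik matrix. Then every eigenvalue of $K$ and of ${*K}$ is $\ge 1$. Moreover, for every $\lambda>1$, $\lambda$ is an eigenvalue of $K$ if and only if it is an eigenvalue of ${*K}$, with the same multiplicity. Consequently the multiplicities $m_K(1)$, $m_{*K}(1)$ of the eigenvalue $1$ satisfy $m_K(1)-m_{*K}(1)=(|E|-|V|+1)-(|V|-1)$; in particular if $|E|=2|V|-2$ then $K$ and ${*K}$ have the same spectrum with multiplicities and are similar.
   Context: Setup. Let $G=(V,E)$ be a finite connected graph with oriented edges (loops and multiple edges allowed), with edge space $\mathbb{R}^{E}$ carrying the Euclidean inner product $\langle\cdot,\cdot\rangle$, each edge identified with its standard basis vector. Fix a spanning tree $T\subseteq E$ of the underlying undirected graph. Edges in $T$ are cochords $e_\mu$, $\mu=1,\dots,|V|-1$; edges not in $T$ are chords $e_\alpha$, $\alpha=|V|,\dots,|E|$. For a chord $e_\alpha$, $T\cup\{e_\alpha\}$ contains a unique cycle; $c_\alpha\in\mathbb{R}^E$ has entry $+1$ (resp. $-1$) on each edge of this cycle whose orientation agrees (resp. disagrees) with traversal of the cycle in the direction of $e_\alpha$, and $0$ elsewhere. For a cochord $e_\mu$, $T\setminus\{e_\mu\}$ has two components; let $S_\mu$ be the vertex set of the component containing the tail of $e_\mu$; $c_\mu\in\mathbb{R}^E$ has entry $+1$ on edges with tail in $S_\mu$ and head not in $S_\mu$, $-1$ on edges with head in $S_\mu$ and tail not in $S_\mu$,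 and $0$ elsewhere. The cycle Kirchhoff–Symanzik (KS) matrix is the $(|E|-|V|+1)\times(|E|-|V|+1)$ Gram matrix $K=(\langle c_\alpha,c_{\alpha'}\rangle)_{\alpha,\alpha'}$; the cocycle KS matrix is the $(|V|-1)\times(|V|-1)$ Gram matrix ${*K}=(\langle c_\mu,c_{\mu'}\rangle)_{\mu,\mu'}$. *)

(* Defs.v *)
From HB Require Import structures.
From mathcomp Require Import all_boot all_order all_algebra.
Set Implicit Arguments. Unset Strict Implicit. Unset Printing Implicit Defensive.
Import Order.TTheory GRing.Theory Num.Theory.
Local Open Scope ring_scope.

(* A finite oriented multigraph (loops / multiple edges allowed):
   vertex type V, edge type E, each edge f with tail (tl f) and head (hd f). *)
Section Graph.
Variables (V E : finType) (tl hd : E -> V).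

Definition adj (F : {set E}) : rel V :=
  fun x y => [exists f in F, ((tl f == x) && (hd f == y)) || ((tl f == y) && (hd f == x))].

Definition gconnected (F : {set E}) : Prop := forall x y, connect (adj F) x y.

(* T is a spanning tree of the underlying undirected graph: it connects all
   vertices, and it is acyclic (every edge of T is a bridge of T, i.e. T is
   minimally connected). *)
Definition spanning_tree (T : {set E}) : Prop :=
  gconnected T /\ forall e, e \in T -> ~~ connect (adj (T :\ e)) (tl e) (hd e).

(* a step of a walk: an edge with a flag "traversed along its orientation" *)
Definition step_ok (x : V) (s : E * bool) : bool :=
  if s.2 then tl s.1 == x else hd s.1 == x.
Definition step_next (s : E * bool) : V := if s.2 then hd s.1 else tl s.1.

Fixpoint is_walk (F : {set E}) (x : V) (p : seq (E * bool)) : bool :=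
  match p with
  | [::] => true
  | s :: p' => [&& s.1 \in F, step_ok x s & is_walk F (step_next s) p']
  end.

Definition simple_path (F : {set E}) (x y : V) (p : seq (E * bool)) : bool :=
  [&& is_walk F x p, uniq (x :: map step_next p) & last x (map step_next p) == y].

Variable R : numDomainType.

Definition pathvec (p : seq (E * bool)) (f : E) : R :=
  \sum_(s <- p) (if s.1 == f then (if s.2 then 1 else -1) else 0).

(* c is the fundamental cycle vector of chord e w.r.t. T: the unique cycle in
   T ∪ {e} consists of e followed by the (unique) simple tree path from the head
   of e back to its tail; entries are +1/-1 according to agreement of
   orientation with traversal in the direction of e, 0 elsewhere. *)
Definition fund_cycle (T : {set E}) (e : E) (c : E -> R) : Prop :=
  exists p, simple_path T (hd e) (tl e) p /\
            forall f, c f = (f == e)%:R + pathvec p f.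

Definition cut_side (T : {set E}) (e : E) : {set V} :=
  [set v | connect (adj (T :\ e)) (tl e) v].

Definition fund_cocycle (T : {set E}) (e : E) (f : E) : R :=
  let S := cut_side T e in
  if (tl f \in S) && (hd f \notin S) then 1
  else if (hd f \in S) && (tl f \notin S) then -1 else 0.

(* cycle KS matrix: Gram matrix of the chord cycle vectors (chords = edges not in T) *)
Definition cycleKS (T : {set E}) (c : E -> E -> R) : 'M[R]_#|~: T| :=
  \matrix_(i, j) \sum_f c (enum_val i) f * c (enum_val j) f.

Definition cocycleKS (T : {set E}) : 'M[R]_#|T| :=
  \matrix_(i, j) \sum_f fund_cocycle T (enum_val i) f * fund_cocycle T (enum_val j) f.

End Graph.

(* Main.v *)
Require Import Defs.
From HB Require Import structures.
From mathcomp Require Import all_boot all_order all_algebra.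
From mathcomp Require Import ring lra zify.
Set Implicit Arguments. Unset Strict Implicit. Unset Printing Implicit Defensive.
Import Order.TTheory GRing.Theory Num.Theory.
Local Open Scope ring_scope.

Section Sylv.
Variable R : comNzRingType.
Lemma sylvester m n (Y : R) (A : 'M[R]_(m,n)) (B : 'M[R]_(n,m)) :
  \det (Y%:M - A *m B) * Y ^+ n = Y ^+ m * \det (Y%:M - B *m A).
Proof.
pose N := block_mx (Y%:M : 'M_m) A B (1%:M : 'M_n).
have e1 : block_mx (1%:M : 'M_m) (- A) 0 (Y%:M : 'M_n) *m N =
          block_mx (Y%:M - A *m B) 0 (Y *: B) (Y%:M).
  rewrite mulmx_block !mul1mx !mul0mx !add0r !mulmx1 mulNmx addrN.
  by rewrite mul_scalar_mx.
have e2 : block_mx (1%:M : 'M_m) 0 (- B) (Y%:M : 'M_n) *m N =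
          block_mx (Y%:M) A 0 (Y%:M - B *m A).
  rewrite mulmx_block !mul1mx !mul0mx !addr0 !mulmx1 mulNmx.
  by rewrite mul_scalar_mx mul_mx_scalar addNr addrC mulNmx.
have := congr1 determinant e1; rewrite det_mulmx det_ublock det_lblock det1 mul1r !det_scalar.
have := congr1 determinant e2; rewrite det_mulmx det_lblock det_ublock det1 mul1r !det_scalar.
by move=> h2 h1; rewrite -h1 h2.
Qed.
End Sylv.

Section LA.
Variable R : rcfType.

Lemma dotE k (v : 'rV[R]_k) : (v *m v^T) 0 0 = \sum_i v 0 i ^+ 2.
Proof. by rewrite !mxE; apply: eq_bigr => i _; rewrite mxE expr2. Qed.

Lemma dot_ge0 k (v : 'rV[R]_k) : 0 <= (v *m v^T) 0 0.
Proof. by rewrite dotE sumr_ge0 // => i _; rewrite sqr_ge0. Qed.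

Lemma dot_eq0 k (v : 'rV[R]_k) : (v *m v^T) 0 0 = 0 -> v = 0.
Proof.
rewrite dotE => /eqP; rewrite psumr_eq0 => [/allP H|i _]; last exact: sqr_ge0.
apply/rowP => i; rewrite !mxE.
by move: (H i (mem_index_enum _)); rewrite /= sqrf_eq0 => /eqP.
Qed.

Lemma dotM_eq0 k l (u : 'rV[R]_k) (N : 'M[R]_(k,l)) :
  u *m N *m N^T *m u^T = 0 -> u *m N = 0.
Proof.
move=> h; apply: dot_eq0; by rewrite trmx_mul mulmxA h mxE.
Qed.

Lemma ev_ge1 m n (A : 'M[R]_(m,n)) a : eigenvalue (1%:M + A *m A^T) a -> 1 <= a.
Proof.
move/eigenvalueP => [v Hv vn0].
have e : (v *m (1%:M + A *m A^T)) *m v^T = a *: (v *m v^T) by rewrite Hv scalemxAl.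
have e2 : v *m (A *m A^T) *m v^T = (v *m A) *m (v *m A)^T by rewrite trmx_mul !mulmxA.
move: e; rewrite mulmxDr mulmx1 mulmxDl e2 => /(congr1 (fun M : 'M[R]_1 => M 0 0)).
rewrite [in X in X = _]mxE [in X in _ = X]mxE.
have h1 := dot_ge0 (v *m A); have h2 := dot_ge0 v.
have h3 : (v *m v^T) 0 0 != 0 by apply: contra vn0 => /eqP /dot_eq0 ->.
have h4 : 0 < (v *m v^T) 0 0 by rewrite lt_def h3 h2.
move: h1 h4; set s := (v *m v^T) 0 0; set t := (_ *m _) 0 0.
move=> h1 h4 e.
have : (s : R) + (t : R) = a * s by [].
move: h1 h4; move: (s : R) (t : R) => s' t' h1 h4 e'; nra.
Qed.



Lemma charKS m n (A : 'M[R]_(m,n)) :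
  char_poly (1%:M + A *m A^T) * ('X - 1) ^+ n =
  ('X - 1) ^+ m * char_poly (1%:M + A^T *m A).
Proof.
rewrite /char_poly /char_poly_mx !map_mxD !map_mx1 !map_mxM -!map_trmx.
have h : forall k (M : 'M[{poly R}]_k), 'X%:M - (1%:M + M) = ('X - 1)%:M - M.
  by move=> k M; rewrite (raddfB (@scalar_mx _ k)) opprD addrA.
by rewrite !h sylvester.
Qed.

Lemma sim_core n d (M : 'M[R]_n) (K1 K2 : 'M[R]_(d,n)) :
  K1 *m M = 0 -> K2 *m M^T = 0 -> row_free K1 -> (kermx M^T <= K2)%MS ->
  (M^T + K2^T *m K1) \in unitmx /\
  (M^T + K2^T *m K1) *m (M *m M^T) = (M^T *m M) *m (M^T + K2^T *m K1).
Proof.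
move=> h1 h2 fK1 sK2.
have h2' : M *m K2^T = 0 by rewrite -[M]trmxK -trmx_mul h2 trmx0.
split; last first.
  rewrite mulmxDl mulmxDr -!mulmxA (mulmxA K1 M) h1 mul0mx mulmx0.
  by rewrite (mulmxA M K2^T) h2' mul0mx mulmx0.
suff : row_free (M^T + K2^T *m K1) by rewrite row_free_unit.
rewrite -kermx_eq0; apply/eqP/row_matrixP => i; rewrite row0.
set v := row i _.
have vP : v *m (M^T + K2^T *m K1) = 0 by rewrite -row_mul mulmx_ker row0.
have vM : v *m M^T = 0.
  apply: dotM_eq0; rewrite trmxK.
  have : v *m (M^T + K2^T *m K1) *m M = 0 by rewrite vP mul0mx.
  rewrite mulmxDr mulmxDl -(mulmxA v (K2^T *m K1)) -(mulmxA K2^T) h1 mulmx0 mulmx0 addr0 => ->.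
  by rewrite mul0mx.
have : (v <= K2)%MS by apply: submx_trans sK2; apply/sub_kermxP.
case/submxP => D vD.
move: vP; rewrite mulmxDr vM add0r mulmxA => /eqP; rewrite mulmx_free_eq0 // => /eqP.
clearbody v; subst v => h3; apply: dotM_eq0; by rewrite h3 mul0mx.
Qed.

Lemma sim_sq n (M : 'M[R]_n) : exists P : 'M[R]_n, P \in unitmx /\
   P *m (1%:M + M *m M^T) = (1%:M + M^T *m M) *m P.
Proof.
have e : \rank (kermx M^T) = \rank (kermx M) by rewrite !mxrank_ker mxrank_tr.
have h1 : row_base (kermx M) *m M = 0 by apply/sub_kermxP; rewrite eq_row_base.
have h2 : row_base (kermx M^T) *m M^T = 0 by apply/sub_kermxP; rewrite eq_row_base.
have s2 : (kermx M^T <= row_base (kermx M^T))%MS by rewrite eq_row_base.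
move: (row_base (kermx M^T)) h2 s2; rewrite e => K2 h2 s2.
have [uP eP] := sim_core h1 h2 (row_base_free _) s2.
exists (M^T + K2^T *m row_base (kermx M)); split => //.
by rewrite mulmxDr mulmx1 eP mulmxDl mul1mx.
Qed.
End LA.

Section G.
Variables (R : rcfType) (V E : finType) (tl hd : E -> V).

Lemma pathvec_cons (s : E * bool) p f :
  pathvec R (s :: p) f = (if s.1 == f then (if s.2 then 1 else -1) else 0) + pathvec R p f.
Proof. by rewrite /pathvec big_cons. Qed.

Lemma walk_tele F x p (g : V -> R) : is_walk tl hd F x p ->
  \sum_f pathvec R p f * (g (tl f) - g (hd f)) =
  g x - g (last x (map (step_next tl hd) p)).
Proof.
elim: p x => [|s p IH] x /=.
  by move=> _; rewrite subrr big1 // => f _; rewrite /pathvec big_nil mul0r.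
case/and3P => _ ok w.
under eq_bigr => f _ do rewrite pathvec_cons mulrDl.
rewrite big_split /= (IH _ w) (bigD1 s.1) //= eqxx big1 ?addr0; last first.
  by move=> f /negbTE; rewrite eq_sym => ->; rewrite mul0r.
move: ok; rewrite /step_ok /step_next; case: s.2 => /eqP ->.
  by rewrite mul1r addrA subrK.
by rewrite mulN1r opprB addrA subrK.
Qed.

Lemma pathvec_out F x p f : is_walk tl hd F x p -> f \notin F -> pathvec R p f = 0.
Proof.
elim: p x => [|s p IH] x /=; first by rewrite /pathvec big_nil.
case/and3P => sF _ w fF; rewrite pathvec_cons (IH _ w fF) addr0.
by case: eqP => // e; move: fF; rewrite -e sF.
Qed.


Lemma adj_sym F : symmetric (adj tl hd F).
Proof. by move=> x y; apply: eq_existsb => f; rewrite orbC. Qed.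

Lemma cocycleE T e f : fund_cocycle tl hd R T e f =
  (tl f \in cut_side tl hd T e)%:R - (hd f \in cut_side tl hd T e)%:R.
Proof.
rewrite /fund_cocycle.
by case: (tl f \in _); case: (hd f \in _) => /=; rewrite ?subrr ?subr0 ?sub0r.
Qed.

Variable T : {set E}.
Hypothesis HT : spanning_tree tl hd T.

Lemma cocycle_tree e f : e \in T -> f \in T ->
  fund_cocycle tl hd R T e f = (f == e)%:R.
Proof.
move=> eT fT; rewrite cocycleE.
case: (f =P e) => [->|ne].
  rewrite !inE connect0 (negbTE (HT.2 e eT)) /=; by rewrite subr0.
have a : adj tl hd (T :\ e) (tl f) (hd f).
  by apply/existsP; exists f; rewrite !inE fT !eqxx /= !andbT; apply/eqP.
rewrite /cut_side !inE (same_connect1r (sym_connect_sym (@adj_sym _)) a).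
by rewrite subrr.
Qed.

Lemma cocycle_chord (c : E -> R) e a : e \in T -> a \notin T ->
  fund_cycle tl hd T a c ->
  fund_cocycle tl hd R T e a = - c e.
Proof.
move=> eT aT [p [/and3P [w _ /eqP lst] cE]].
pose g v : R := (v \in cut_side tl hd T e)%:R.
have t := walk_tele g w; rewrite lst in t.
have t2 : \sum_f pathvec R p f * (g (tl f) - g (hd f)) = pathvec R p e.
  rewrite (bigD1 e) //= big1 ?addr0.
    by rewrite /g -cocycleE cocycle_tree // eqxx mulr1.
  move=> f fe; have [fT|fT] := boolP (f \in T).
    by rewrite /g -cocycleE cocycle_tree // (negbTE fe) mulr0.
  by rewrite (pathvec_out w fT) mul0r.
rewrite cE; have -> : (e == a) = false.
  by apply/negbTE; apply: contraNneq aT => <-.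
rewrite add0r -t2 t cocycleE opprB.
by [].
Qed.

Variable c : E -> E -> R.
Hypothesis Hc : forall e, e \notin T -> fund_cycle tl hd T e (c e).

Definition Amat : 'M[R]_(#|~: T|, #|T|) :=
  \matrix_(i, j) c (enum_val i) (enum_val j).

Lemma chord_val a f : a \notin T -> f \notin T -> c a f = (f == a)%:R.
Proof.
move=> aT fT; have [p [/and3P [w _ _] cE]] := Hc aT.
by rewrite cE (pathvec_out w fT) addr0.
Qed.

Lemma notinT (i : 'I_#|~: T|) : enum_val i \notin T.
Proof. by have := enum_valP i; rewrite inE. Qed.

Lemma K_eq : cycleKS T c = 1%:M + Amat *m Amat^T.
Proof.
apply/matrixP => i j; rewrite !mxE (bigID (fun f => f \in T)) /= addrC.
congr (_ + _).
  rewrite (bigD1 (enum_val i)) ?notinT //= big1.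
    rewrite !chord_val ?notinT // eqxx mul1r addr0 (inj_eq enum_val_inj).
    by [].
  move=> f /andP [fT fi]; rewrite !chord_val ?notinT //.
  by rewrite (negbTE fi) mul0r.
rewrite big_enum_val; apply: eq_bigr => k _; by rewrite !mxE.
Qed.

Lemma sK_eq : cocycleKS tl hd R T = 1%:M + Amat^T *m Amat.
Proof.
apply/matrixP => i j; rewrite !mxE (bigID (fun f => f \in T)) /=.
have eT (k : 'I_#|T|) : enum_val k \in T by apply: enum_valP.
congr (_ + _).
  rewrite (bigD1 (enum_val i)) ?eT //= big1.
    rewrite !cocycle_tree ?eT // eqxx mul1r addr0 (inj_eq enum_val_inj) eq_sym.
    by [].
  move=> f /andP [fT fi]; rewrite !cocycle_tree ?eT //.
  by rewrite (negbTE fi) mul0r.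
rewrite (eq_bigl (fun f => f \in ~: T)); last by move=> f; rewrite inE.
rewrite big_enum_val; apply: eq_bigr => k _; rewrite !mxE.
by rewrite !(cocycle_chord (eT _) (notinT k) (Hc (notinT k))) mulrNN.
Qed.

Definition Bmat : 'M[R]_(#|V|, #|T|) :=
  \matrix_(v, k) ((tl (enum_val k) == enum_val v)%:R - (hd (enum_val k) == enum_val v)%:R).

Lemma sum_delta (w : V -> R) t : \sum_x w x * (t == x)%:R = w t.
Proof.
rewrite (bigD1 t) //= eqxx mulr1 big1 ?addr0 // => x xt.
by rewrite eq_sym (negbTE xt) mulr0.
Qed.

Lemma Bsum (w : 'I_#|V| -> R) l :
  \sum_v w v * Bmat v l = w (enum_rank (tl (enum_val l))) - w (enum_rank (hd (enum_val l))).
Proof.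
rewrite (reindex (@enum_rank V)); last first.
  by exists enum_val => x _; [exact: enum_rankK | exact: enum_valK].
under eq_bigr => x _ do rewrite mxE enum_rankK mulrBr.
rewrite sumrB (sum_delta (fun x => w (enum_rank x))) (sum_delta (fun x => w (enum_rank x))).
by [].
Qed.

Lemma rankB : \rank Bmat = #|T|.
Proof.
pose X : 'M[R]_(#|T|, #|V|) :=
  \matrix_(k, v) ((enum_val v \in cut_side tl hd T (enum_val k))%:R).
have eT (k : 'I_#|T|) : enum_val k \in T by apply: enum_valP.
have XB : X *m Bmat = 1%:M.
  apply/matrixP => k l; rewrite mxE (Bsum (fun v => X k v)) !mxE !enum_rankK.
  rewrite -cocycleE cocycle_tree ?eT // (inj_eq enum_val_inj) eq_sym.
  by [].
apply/eqP; rewrite eqn_leq rank_leq_col /=.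
by have := mxrankM_maxr X Bmat; rewrite XB mxrank1.
Qed.

Lemma rank_kerB : (0 < #|V|)%N -> \rank (kermx Bmat) = 1%N.
Proof.
move=> HV; pose u : 'rV[R]_#|V| := const_mx 1.
have un0 : u != 0.
  apply/eqP => /rowP /(_ (Ordinal HV)); rewrite !mxE => /eqP; by rewrite oner_eq0.
have uB : u *m Bmat = 0.
  apply/rowP => l; rewrite !mxE (Bsum (fun v => u 0 v)) !mxE; by rewrite subrr.
have ru : \rank u = 1%N by rewrite rank_rV un0.
apply/eqP; rewrite eqn_leq; apply/andP; split; last first.
  by rewrite -ru mxrankS //; apply/sub_kermxP.
rewrite -ru mxrankS //; apply/row_subP => i.
set r := row i _.
have rB : r *m Bmat = 0 by rewrite -row_mul mulmx_ker row0.
pose W x := r 0 (enum_rank x).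
have Wadj : forall x y, adj tl hd T x y -> W x = W y.
  move=> x y /existsP [f /andP [fT /orP [] /andP [/eqP tx /eqP hy]]].
    have := congr1 (fun M : 'rV_#|T| => M 0 (enum_rank_in fT f)) rB.
    rewrite !mxE (Bsum (fun v => r 0 v)) (enum_rankK_in fT fT) tx hy /W => /eqP.
    rewrite subr_eq0 => /eqP h; exact: h.
  have := congr1 (fun M : 'rV_#|T| => M 0 (enum_rank_in fT f)) rB.
  rewrite !mxE (Bsum (fun v => r 0 v)) (enum_rankK_in fT fT) tx hy /W => /eqP.
  rewrite subr_eq0 => /eqP h; exact: (esym h).
have Wc : forall x y, W x = W y.
  move=> x y; have := HT.1 x y; case/connectP => p pth ->.
  elim: p x pth => [|z p IH] x //= /andP [a pth].
  by rewrite (Wadj _ _ a) (IH _ pth).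
have -> : r = W (enum_val (Ordinal HV)) *: u.
  apply/rowP => v; rewrite [RHS]mxE [in RHS]mxE mulr1.
  by rewrite -(Wc (enum_val v)) /W enum_valK.
by apply: scalemx_sub.
Qed.

Lemma tree_card : (0 < #|V|)%N -> #|V| = #|T|.+1.
Proof.
move=> HV; have := rank_kerB HV; rewrite mxrank_ker rankB.
lia.
Qed.
End G.

Lemma castsim (R : rcfType) m n (H : m = n) (A : 'M[R]_(m,n)) :
  exists P : 'M[R]_n, P \in unitmx /\
    P *m castmx (H, H) (1%:M + A *m A^T) = (1%:M + A^T *m A) *m P.
Proof. by case: n / H A => A; rewrite castmx_id; apply: sim_sq. Qed.

Lemma root_mup (R : rcfType) (q : {poly R}) a : q != 0 -> root q a = (0 < mup a q)%N.
Proof. by move=> q0; rewrite (mup_geq _ _ q0) expr1 dvdp_XsubCl. Qed.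


Theorem theorem5 (R : rcfType) (V E : finType) (tl hd : E -> V)
  (T : {set E}) (c : E -> E -> R)
  (HV : (0 < #|V|)%N)
  (Hconn : gconnected tl hd setT)
  (HT : spanning_tree tl hd T)
  (Hc : forall e, e \notin T -> fund_cycle tl hd T e (c e)) :
  let K := cycleKS T c in
  let sK := @cocycleKS V E tl hd R T in
  (forall a : R, eigenvalue K a -> 1 <= a) /\
  (forall a : R, eigenvalue sK a -> 1 <= a) /\
  (forall a : R, 1 < a -> (eigenvalue K a <-> eigenvalue sK a) /\
                          mup a (char_poly K) = mup a (char_poly sK)) /\
  ((mup 1 (char_poly K))%:Z - (mup 1 (char_poly sK))%:Z =
     (#|E|%:Z - #|V|%:Z + 1) - (#|V|%:Z - 1)) /\
  (#|E| = (2 * #|V| - 2)%N ->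
     (forall a : R, mup a (char_poly K) = mup a (char_poly sK)) /\
     exists H : #|~: T| = #|T|,
       exists P : 'M[R]_#|T|, P \in unitmx /\ P *m castmx (H, H) K = sK *m P).
Proof.
move=> K sK.
pose A := Amat T c.
have hK : K = 1%:M + A *m A^T by exact: (K_eq Hc).
have hsK : sK = 1%:M + A^T *m A by apply: sK_eq.
have card : #|V| = #|T|.+1 by apply: tree_card HT HV.
have cardE : (#|T| + #|~: T| = #|E|)%N by apply: cardsC.
have rel := charKS A.
have XE : ('X - 1 : {poly R}) = 'X - 1%:P by rewrite polyC1.
have mupE : forall a, (mup a (char_poly K) + (if (1%R:R) == a then #|T| else 0) =
                      (if (1%R:R) == a then #|~: T| else 0) + mup a (char_poly sK))%N.
  move=> a; have := congr1 (mup a) rel; rewrite XE -hK -hsK.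
  have nz k : (('X - 1%:P) ^+ k : {poly R}) != 0 by rewrite expf_neq0 // polyXsubC_eq0.
  rewrite (mupM _ (monic_neq0 (char_poly_monic _)) (nz _)) (mupM _ (nz _) (monic_neq0 (char_poly_monic _))) !(mup_XsubCX _ a 1).
  by [].
split.
  by move=> a; rewrite hK; apply: ev_ge1.
split.
  by move=> a; rewrite hsK; have := @ev_ge1 _ _ _ A^T a; rewrite trmxK.
split.
  move=> a a1; have na : ((1%R:R) == a) = false by rewrite eq_sym gt_eqF.
  have e : mup a (char_poly K) = mup a (char_poly sK).
    by have := mupE a; rewrite na addn0 add0n.
  split => //.
  rewrite !eigenvalue_root_char !root_mup ?monic_neq0 ?char_poly_monic // e.
  by [].
have m1 := mupE 1; rewrite eqxx in m1.
split.
  lia.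
move=> hE; have mn : #|~: T| = #|T| by lia.
split.
  move=> a; have := mupE a; case: (1 == a); lia.
exists mn; rewrite hK hsK; exact: castsim.
Qed.
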